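(* For $\epsilon>0$, $a\geq0$ with $\epsilon a$ belonging to a bounded interval, let $u_{\epsilon,a}$ be solutions of $\epsilon^2\Delta u+\mu u-|u|^2u+\epsilon af=0$ on $\mathbb{R}^2$ with $u_{\epsilon,a}(x)\to0$ as $|x|\to\infty$. Then the maps $u_{\epsilon,a}$ and $\epsilon\nabla u_{\epsilon,a}$ are uniformly bounded (on $\mathbb{R}^2$, uniformly in $\epsilon,a$).
   Context: $\mu\in C^\infty(\mathbb{R}^2,\mathbb{R})$ is radial, $\mu(x)=\mu_{\mathrm{rad}}(|x|)$, $\mu\in L^\infty$, $\mu_{\mathrm{rad}}'<0$ on $(0,\infty)$, $\mu_{\mathrm{rad}}(\rho)=0$ for a unique $\rho>0$ ($\mu_{\mathrm{rad}}$ smooth with an even extension). $f\in C^\infty(\mathbb{R}^2,\mathbb{R}^2)$, $f(x)=f_{\mathrm{rad}}(|x|)\frac{x}{|x|}$, $f_{\mathrm{rad}}$ smooth with an odd extension, $f\in L^1\cap L^\infty$, $f_{\mathrm{rad}}>0$ on $(0,\infty)$. *)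

(* Defs.v *)
(* concrete reals R with Coquelicot derivatives / integrals.
   Points of R^2 are pairs of coordinates (x, y); R^2-valued maps are given
   by their two component functions. *)
From Stdlib Require Import Reals List.
From Coquelicot Require Import Coquelicot.
Open Scope R_scope.

Definition dx (g : R -> R -> R) : R -> R -> R :=
  fun x y => Derive (fun t => g t y) x.
Definition dy (g : R -> R -> R) : R -> R -> R :=
  fun x y => Derive (fun t => g x t) y.

(* iterated partial derivative along a word of directions (true = x, false = y) *)
Fixpoint iter_partial (l : list bool) (g : R -> R -> R) : R -> R -> R :=
  match l with
  | nil => g
  | b :: l' => (if b then dx else dy) (iter_partial l' g)
  end.

Definition Ck2 (k : nat) (g : R -> R -> R) : Prop :=
  (forall l : list bool, (length l < k)%nat ->
      forall x y, ex_derive (fun t => iter_partial l g t y) x /\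
                  ex_derive (fun t => iter_partial l g x t) y)
  /\ (forall l : list bool, (length l <= k)%nat ->
      forall x y, continuous (fun p : R * R => iter_partial l g (fst p) (snd p)) (x, y)).

Definition smooth2 (g : R -> R -> R) : Prop := forall k, Ck2 k g.

Definition smooth1 (h : R -> R) : Prop := forall n x, ex_derive_n h n x.

Definition norm2 (x y : R) : R := sqrt (x ^ 2 + y ^ 2).

Definition lap (g : R -> R -> R) : R -> R -> R :=
  fun x y => dx (dx g) x y + dy (dy g) x y.

(* L^infinity (for continuous functions: bounded everywhere) *)
Definition bounded2 (g : R -> R -> R) : Prop :=
  exists B, forall x y, Rabs (g x y) <= B.

(* L^1(R^2) for a continuous function: the (iterated Riemann) integrals of |g|
   over the squares [-N,N]^2 are uniformly bounded *)
Definition integrable2 (g : R -> R -> R) : Prop :=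
  exists B, forall N, 0 < N ->
    RInt (fun x => RInt (fun y => Rabs (g x y)) (- N) N) (- N) N <= B.

(* Main.v *)
Require Import Defs.
From Stdlib Require Import Reals List Lra Psatz IndefiniteDescription.
From Coquelicot Require Import Coquelicot.
Open Scope R_scope.

Lemma cont1_of_2d (z : R -> R -> R) x y :
  continuity_2d_pt z x y -> continuity_pt (fun t => z x t) y.
Proof.
  intros Hc. unfold continuity_pt, continue_in, limit1_in, limit_in.
  intros eps Heps. destruct (Hc (mkposreal eps Heps)) as [δ Hδ].
  exists δ; split; [apply cond_pos|]. intros y' [_ Hy'].
  simpl in Hy' |- *. unfold R_dist in *.
  apply Hδ; [rewrite Rminus_eq_0, Rabs_R0; apply cond_pos | exact Hy'].
Qed.

Lemma evt2_min (z : R -> R -> R) a b c d :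
  a <= b -> c <= d -> (forall x y, continuity_2d_pt z x y) ->
  exists p q, a <= p <= b /\ c <= q <= d /\
    forall x y, a <= x <= b -> c <= y <= d -> z p q <= z x y.
Proof.
  intros Hab Hcd Hc.
  assert (H1 : forall x, exists m, (forall y, c <= y <= d -> z x m <= z x y) /\ c <= m <= d).
  { intro x. apply continuity_ab_min; auto. intros y _. apply cont1_of_2d, Hc. }
  set (ym := fun x => proj1_sig (constructive_indefinite_description _ (H1 x))).
  assert (HM : forall x, (forall y, c <= y <= d -> z x (ym x) <= z x y) /\ c <= ym x <= d).
  { intro x. unfold ym. exact (proj2_sig (constructive_indefinite_description _ (H1 x))). }
  set (M := fun x => z x (ym x)).
  assert (HcM : forall x0, a <= x0 <= b -> continuity_pt M x0).
  { intros x0 Hx0. unfold continuity_pt, continue_in, limit1_in, limit_in.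
    intros eps Heps.
    destruct (uniform_continuity_2d z (a-1) (b+1) c d) with (eps := mkposreal eps Heps)
      as [delta Hd].
    { intros; apply Hc. }
    exists (Rmin delta 1). split.
    { apply Rmin_pos; [apply cond_pos|lra]. }
    intros x [_ Hx]. simpl in Hx |- *. unfold R_dist in *.
    assert (Hx1 : Rabs (x - x0) < delta) by (eapply Rlt_le_trans; [exact Hx| apply Rmin_l]).
    assert (Hx2 : Rabs (x - x0) < 1) by (eapply Rlt_le_trans; [exact Hx| apply Rmin_r]).
    apply Rabs_def2 in Hx2.
    destruct (HM x) as [HMx Hyx]. destruct (HM x0) as [HMx0 Hyx0].
    assert (E1 : Rabs (z x (ym x0) - z x0 (ym x0)) < eps).
    assert (H0 : forall w, Rabs (w - w) < delta) by (intro w; rewrite Rminus_eq_0, Rabs_R0; apply cond_pos).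
    assert (Hx1' : Rabs (x0 - x) < delta) by (rewrite Rabs_minus_sym; exact Hx1).
    { apply (Hd x0 (ym x0) x (ym x0)). all: first [lra | exact Hx1 | exact Hx1' | apply H0]. }
    assert (E2 : Rabs (z x0 (ym x) - z x (ym x)) < eps).
    { apply (Hd x (ym x) x0 (ym x)); try lra. rewrite Rabs_minus_sym; exact Hx1. rewrite Rminus_eq_0, Rabs_R0; apply cond_pos. }
    apply Rabs_def2 in E1. apply Rabs_def2 in E2.
    specialize (HMx (ym x0) Hyx0). specialize (HMx0 (ym x) Hyx).
    unfold M. apply Rabs_def1; lra. }
  destruct (continuity_ab_min M a b Hab HcM) as [p [Hp Hpab]].
  exists p, (ym p). split; [exact Hpab|]. split; [apply HM|].
  intros x y Hx Hy. apply Rle_trans with (M x); [apply Hp; exact Hx|].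
  apply (proj1 (HM x)); exact Hy.
Qed.


Lemma locmin_d2 (h h' : R -> R) (t0 h2 δ : R) :
  0 < δ -> (forall t, Rabs (t - t0) < δ -> is_derive h t (h' t)) ->
  is_derive h' t0 h2 -> (forall t, Rabs (t - t0) < δ -> h t0 <= h t) -> 0 <= h2.
Proof.
  intros Hδ Hd Hd2 Hmin.
  destruct (Rle_or_lt 0 h2) as [|Hneg]; [assumption|exfalso].
  apply is_derive_Reals in Hd2.
  destruct (Hd2 (- h2 / 2)) as [δ' Hδ']; [lra|].
  assert (Hq : forall σ, σ <> 0 -> Rabs σ < δ' ->
             (h' (t0 + σ) - h' t0) / σ < h2 / 2).
  { intros σ H1 H2. specialize (Hδ' σ H1 H2). apply Rabs_def2 in Hδ'. lra. }
  assert (Hδ'0 := cond_pos δ').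
  set (s := Rmin δ δ' / 2).
  assert (Hs0 : 0 < s) by (unfold s; assert (0 < Rmin δ δ') by (apply Rmin_pos; lra); lra).
  assert (Hs1 : s < δ) by (unfold s; generalize (Rmin_l δ δ'); lra).
  assert (Hs2 : s < δ') by (unfold s; generalize (Rmin_r δ δ'); lra).
  assert (Hder : forall c, Rabs (c - t0) <= s -> derivable_pt_lim h c (h' c)).
  { intros c Hc. apply is_derive_Reals, Hd. lra. }
  destruct (Rle_or_lt (h' t0) 0) as [Hp|Hp].
  - destruct (MVT_cor2 h h' t0 (t0 + s)) as [xi [Hxi1 Hxi2]]; [lra| |].
    { intros c Hc. apply Hder. apply Rabs_le; lra. }
    assert (Hσ := Hq (xi - t0)).
    replace (t0 + (xi - t0)) with xi in Hσ by ring.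
    assert (Hq' : (h' xi - h' t0) / (xi - t0) < h2 / 2).
    { apply Hσ; [lra|]. rewrite Rabs_pos_eq; lra. }
    assert (E : h' xi - h' t0 = (h' xi - h' t0) / (xi - t0) * (xi - t0)) by (field; lra).
    assert (h' xi < 0) by nra.
    specialize (Hmin (t0 + s)). replace (t0 + s - t0) with s in Hmin by ring.
    rewrite Rabs_pos_eq in Hmin by lra. specialize (Hmin Hs1). nra.
  - destruct (MVT_cor2 h h' (t0 - s) t0) as [xi [Hxi1 Hxi2]]; [lra| |].
    { intros c Hc. apply Hder. apply Rabs_le; lra. }
    assert (Hσ := Hq (xi - t0)).
    replace (t0 + (xi - t0)) with xi in Hσ by ring.
    assert (Hq' : (h' xi - h' t0) / (xi - t0) < h2 / 2).
    { apply Hσ; [lra|]. rewrite Rabs_left; lra. }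
    assert (E : h' xi - h' t0 = (h' xi - h' t0) / (xi - t0) * (xi - t0)) by (field; lra).
    assert (h' xi > 0) by nra.
    specialize (Hmin (t0 - s)). replace (t0 - s - t0) with (- s) in Hmin by ring.
    rewrite Rabs_Ropp, Rabs_pos_eq in Hmin by lra. specialize (Hmin Hs1). nra.
Qed.

Lemma deriv_bound (g : R -> R) x0 L c δ :
  is_derive g x0 L -> g x0 = 0 -> 0 < δ ->
  (forall t, 0 < t < δ -> Rabs (g (x0 + t)) <= c * t) -> Rabs L <= c.
Proof.
  intros Hd Hg0 Hδ Hb.
  destruct (Rle_or_lt (Rabs L) c) as [|Hlt]; [assumption|exfalso].
  apply is_derive_Reals in Hd.
  destruct (Hd (Rabs L - c)) as [δ' Hδ']; [lra|].
  assert (Hδ'0 := cond_pos δ').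
  set (t := Rmin δ δ' / 2).
  assert (Ht0 : 0 < t) by (unfold t; assert (0 < Rmin δ δ') by (apply Rmin_pos; lra); lra).
  assert (Ht1 : t < δ) by (unfold t; generalize (Rmin_l δ δ'); lra).
  assert (Ht2 : t < δ') by (unfold t; generalize (Rmin_r δ δ'); lra).
  specialize (Hδ' t). rewrite Hg0, Rminus_0_r in Hδ'.
  assert (H1 : Rabs (g (x0 + t) / t - L) < Rabs L - c).
  { apply Hδ'; [lra| rewrite Rabs_pos_eq; lra]. }
  assert (H2 : Rabs (g (x0 + t) / t) <= c).
  { unfold Rdiv. rewrite Rabs_mult, Rabs_inv, (Rabs_pos_eq t) by lra.
    apply (Rmult_le_reg_r t); [lra|]. rewrite Rmult_assoc, Rinv_l by lra.
    rewrite Rmult_1_r. apply Hb; lra. }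
  assert (H3 : Rabs L <= Rabs (g (x0 + t) / t) + Rabs (g (x0 + t) / t - L)).
  { replace L with (g (x0 + t) / t - (g (x0 + t) / t - L)) at 1 by ring.
    apply Rabs_triang_inv2 || (unfold Rminus; eapply Rle_trans; [apply Rabs_triang|]; rewrite Rabs_Ropp; lra). }
  lra.
Qed.


Ltac cont2 := repeat first [apply continuity_2d_pt_minus | apply continuity_2d_pt_plus
  | apply continuity_2d_pt_mult | apply continuity_2d_pt_const
  | apply continuity_2d_pt_id1 | apply continuity_2d_pt_id2].

Ltac conjs := repeat match goal with |- _ /\ _ => split | |- True => exact I end.

Ltac exd H := conjs; match goal with
 | |- ex_derive (fun x => dx _ x ?y) ?p => exact (proj2 (H p y))
 | |- ex_derive (fun x => dy _ ?y x) ?p => exact (proj2 (H y p))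
 | |- ex_derive (fun x => _ x ?y) ?p => exact (proj1 (H p y))
 | |- ex_derive (fun x => _ ?y x) ?p => exact (proj1 (H y p)) end.

Lemma cont2_shift (v : R -> R -> R) x0 :
  (forall x y, continuity_2d_pt v x y) ->
  forall x y, continuity_2d_pt (fun a b => v (2*x0 - a) b) x y.
Proof.
  intros Hc x y eps. destruct (Hc (2*x0 - x) y eps) as [δ Hδ]. exists δ.
  intros u w Hu Hw. apply Hδ; [|exact Hw].
  replace (2*x0-u - (2*x0-x)) with (-(u-x)) by ring. rewrite Rabs_Ropp; exact Hu.
Qed.

Lemma grad_x (v : R -> R -> R) (eps A K : R) :
  0 < eps -> 0 <= A -> 0 <= K ->
  (forall x y, continuity_2d_pt v x y) ->
  (forall x y, ex_derive (fun t => v t y) x /\ ex_derive (fun t => dx v t y) x) ->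
  (forall x y, ex_derive (fun t => v x t) y /\ ex_derive (fun t => dy v x t) y) ->
  (forall x y, Rabs (v x y) <= A) ->
  (forall x y, Rabs (eps^2 * (dx (dx v) x y + dy (dy v) x y)) <= K) ->
  forall x0 y0, eps * Rabs (dx v x0 y0) <= 2*A + (K+1)/2.
Proof.
  intros He HA HK Hc Hdx Hdy HvA HvK x0 y0.
  set (K' := 2*A+K+1). set (B := A + K'/2).
  set (phi := fun a b => A*(((b-y0)/eps)*((b-y0)/eps)) + B*((a-x0)/eps)
                         - K'/2*(((a-x0)/eps)*((a-x0)/eps))).
  set (w := fun a b => (v a b - v (2*x0 - a) b)/2).
  assert (Hw : forall a b, Rabs (w a b) <= A).
  { intros a b. unfold w. unfold Rdiv. rewrite Rabs_mult, Rabs_inv, (Rabs_pos_eq 2) by lra.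
    generalize (Rabs_triang (v a b) (- v (2*x0 - a) b)). rewrite Rabs_Ropp.
    generalize (HvA a b) (HvA (2*x0-a) b). unfold Rminus. intros; lra. }
  assert (Hw0 : forall b, w x0 b = 0).
  { intro b. unfold w. replace (2*x0 - x0) with x0 by ring. field. }
  assert (Hz : forall σ, (σ = 1 \/ σ = -1) -> forall x y, x0 <= x <= x0+eps ->
             y0-eps <= y <= y0+eps -> σ * w x y <= phi x y).
  { intros σ Hσ.
    set (z := fun a b => phi a b - σ * w a b).
    assert (Hcz : forall x y, continuity_2d_pt z x y).
    { intros x y. unfold z, phi, w. apply continuity_2d_pt_minus; [cont2|].
      apply continuity_2d_pt_mult; [cont2|].
      apply continuity_2d_pt_mult; [|cont2].
      apply continuity_2d_pt_minus; [apply Hc|apply cont2_shift, Hc]. }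
    destruct (evt2_min z x0 (x0+eps) (y0-eps) (y0+eps)) as [p [q [Hp [Hq Hmin]]]];
      [lra|lra|exact Hcz|].
    assert (Hsw : forall a b, σ * w a b <= A).
    { intros a b. generalize (Hw a b). intro H. apply Rabs_le_between in H. destruct Hσ; subst; lra. }
    assert (Hzpq : 0 <= z p q).
    { destruct (Rle_or_lt 0 (z p q)) as [|Hneg]; [assumption|exfalso].
      assert (Hp1 : p <> x0).
      { intro E. subst p. unfold z in Hneg. rewrite Hw0 in Hneg. unfold phi in Hneg.
        replace ((x0 - x0)/eps) with 0 in Hneg by (field; lra).
        assert (0 <= ((q-y0)/eps)*((q-y0)/eps)) by apply Rle_0_sqr. assert (0 <= A * ((q - y0) / eps * ((q - y0) / eps))) by (apply Rmult_le_pos; assumption). lra. }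
      assert (Hp2 : p <> x0 + eps).
      { intro E. subst p. unfold z in Hneg. generalize (Hsw (x0+eps) q). unfold phi in Hneg.
        replace ((x0 + eps - x0)/eps) with 1 in Hneg by (field; lra).
        assert (0 <= ((q-y0)/eps)*((q-y0)/eps)) by apply Rle_0_sqr. unfold B in Hneg. nra. }
      assert (Hyb : forall b, b = y0 - eps \/ b = y0 + eps -> ((b-y0)/eps)*((b-y0)/eps) = 1).
      { intros b [E|E]; subst b; field; lra. }
      assert (Hsr : 0 <= (p-x0)/eps <= 1).
      { split. apply Rdiv_le_0_compat; lra.
        apply (Rmult_le_reg_r eps); [lra|]. unfold Rdiv. rewrite Rmult_assoc, Rinv_l by lra. lra. }
      assert (Hq1 : q <> y0 - eps /\ q <> y0 + eps).
      { split; intro E; unfold z, phi in Hneg; rewrite (Hyb q) in Hneg by tauto;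
        generalize (Hsw p q); unfold B in Hneg; set (s := (p - x0)/eps) in *;
        assert (0 <= K' * (s*(1-s))) by (apply Rmult_le_pos; [unfold K'; lra| nra]);
        assert (0 <= A * s) by (apply Rmult_le_pos; lra); nra. }
      set (δ := Rmin (Rmin (p - x0) (x0+eps-p)) (Rmin (q-(y0-eps)) (y0+eps-q))).
      assert (Hδ : 0 < δ).
      { unfold δ. repeat apply Rmin_pos; lra. }
      assert (Hδ1 : δ <= p - x0 /\ δ <= x0+eps-p /\ δ <= q-(y0-eps) /\ δ <= y0+eps-q).
      { unfold δ. generalize (Rmin_l (Rmin (p - x0) (x0+eps-p)) (Rmin (q-(y0-eps)) (y0+eps-q)))
          (Rmin_r (Rmin (p - x0) (x0+eps-p)) (Rmin (q-(y0-eps)) (y0+eps-q)))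
          (Rmin_l (p - x0) (x0+eps-p)) (Rmin_r (p - x0) (x0+eps-p))
          (Rmin_l (q-(y0-eps)) (y0+eps-q)) (Rmin_r (q-(y0-eps)) (y0+eps-q)). lra. }
      set (hx' := fun t => B/eps - K'/eps^2 * (t - x0) - σ*((dx v t q + dx v (2*x0-t) q)/2)).
      set (h2x := -K'/eps^2 - σ*((dx (dx v) p q - dx (dx v) (2*x0-p) q)/2)).
      set (ky' := fun t => 2*A*(t-y0)/eps^2 - σ*((dy v p t - dy v (2*x0-p) t)/2)).
      set (k2 := 2*A/eps^2 - σ*((dy (dy v) p q - dy (dy v) (2*x0-p) q)/2)).
      assert (H1 : 0 <= h2x).
      { apply (locmin_d2 (fun t => z t q) hx' p h2x δ Hδ).
        - intros t _. unfold z, phi, w, hx'. auto_derive.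
          + exd Hdx.
          + unfold dx. unfold Rminus. field; lra.
        - unfold hx', h2x. auto_derive.
          + exd Hdx.
          + unfold dx. unfold Rminus. field; lra.
        - intros t Ht. apply Hmin; try lra. apply Rabs_def2 in Ht. lra. }
      assert (H2 : 0 <= k2).
      { apply (locmin_d2 (fun t => z p t) ky' q k2 δ Hδ).
        - intros t _. unfold z, phi, w, ky'. auto_derive.
          + exd Hdy.
          + unfold dy. unfold Rminus. field; lra.
        - unfold ky', k2. auto_derive.
          + exd Hdy.
          + unfold dy. unfold Rminus. field; lra.
        - intros t Ht. apply Hmin; try lra. apply Rabs_def2 in Ht. lra. }
      set (X := eps^2 * (dx (dx v) p q + dy (dy v) p q)).
      set (Y := eps^2 * (dx (dx v) (2*x0-p) q + dy (dy v) (2*x0-p) q)).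
      assert (E : eps^2*h2x + eps^2*k2 = 2*A - K' - σ*(X - Y)/2).
      { unfold h2x, k2, X, Y. field; lra. }
      assert (0 <= eps^2*h2x) by (apply Rmult_le_pos; [nra|lra]).
      assert (0 <= eps^2*k2) by (apply Rmult_le_pos; [nra|lra]).
      generalize (HvK p q) (HvK (2*x0-p) q). fold X Y. intros HX HY.
      apply Rabs_le_between in HX. apply Rabs_le_between in HY. unfold K' in E.
      destruct Hσ; subst σ; lra. }
    intros x y Hx Hy. specialize (Hmin x y Hx Hy). unfold z in Hmin, Hzpq. lra. }
  assert (Hg : is_derive (fun a => w a y0) x0 (dx v x0 y0)).
  { unfold w. auto_derive. exd Hdx.
    unfold dx. replace (2 * x0 + - x0) with x0 by ring. field. }
  assert (Hb := deriv_bound (fun a => w a y0) x0 (dx v x0 y0) (B/eps) eps Hg (Hw0 y0) He).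
  assert (Hb2 : Rabs (dx v x0 y0) <= B / eps).
  { apply Hb. intros t Ht.
    assert (Hup : forall σ, (σ = 1 \/ σ = -1) -> σ * w (x0+t) y0 <= B/eps*t).
    { intros σ Hσ. eapply Rle_trans; [apply Hz; auto; lra|].
      unfold phi. replace (y0 - y0) with 0 by ring.
      replace (x0 + t - x0) with t by ring.
      assert (0 <= K'/2*((t/eps)*(t/eps))).
      { apply Rmult_le_pos. unfold K'; lra. apply Rle_0_sqr. }
      replace (0/eps) with 0 by (field; lra).
      replace (B*(t/eps)) with (B/eps*t) by (field; lra). lra. }
    generalize (Hup 1 (or_introl eq_refl)) (Hup (-1) (or_intror eq_refl)). intros.
    apply Rabs_le; lra. }
  apply (Rmult_le_compat_l eps) in Hb2; [|lra].
  replace (eps * (B/eps)) with B in Hb2 by (field; lra). unfold B, K' in Hb2. lra.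
Qed.


Ltac exdu u Hx Hy := match goal with
 | |- ex_derive (fun x => dx u x ?y) ?p => exact (proj2 (Hx p y))
 | |- ex_derive (fun x => dy u ?y x) ?p => exact (proj2 (Hy y p))
 | |- ex_derive (fun x => u x ?y) ?p => exact (proj1 (Hx p y))
 | |- ex_derive (fun x => u ?y x) ?p => exact (proj1 (Hy y p)) end.

Lemma abs_le_norm2 a b : Rabs a <= norm2 a b /\ Rabs b <= norm2 a b.
Proof.
  unfold norm2. split; rewrite <- sqrt_Rsqr_abs; apply sqrt_le_1_alt; unfold Rsqr;
  assert (0 <= a*a) by apply Rle_0_sqr; assert (0 <= b*b) by apply Rle_0_sqr; lra.
Qed.

Lemma Ck2_facts u : Ck2 2 u ->
  (forall x y, continuity_2d_pt u x y) /\
  (forall x y, ex_derive (fun t => u t y) x /\ ex_derive (fun t => dx u t y) x) /\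
  (forall x y, ex_derive (fun t => u x t) y /\ ex_derive (fun t => dy u x t) y).
Proof.
  intros [H1 H2].
  assert (L0 : (length (@nil bool) < 2)%nat) by (simpl; lia).
  assert (L1 : (length (true :: nil) < 2)%nat) by (simpl; lia).
  assert (L2 : (length (false :: nil) < 2)%nat) by (simpl; lia).
  assert (L3 : (length (@nil bool) <= 2)%nat) by (simpl; lia).
  split; [|split].
  - intros x y. apply continuity_2d_pt_filterlim. exact (H2 nil L3 x y).
  - intros x y. split. exact (proj1 (H1 nil L0 x y)). exact (proj1 (H1 (true :: nil) L1 x y)).
  - intros x y. split. exact (proj2 (H1 nil L0 x y)). exact (proj2 (H1 (false :: nil) L2 x y)).
Qed.

Lemma grad_y (v : R -> R -> R) (eps A K : R) :
  0 < eps -> 0 <= A -> 0 <= K ->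
  (forall x y, continuity_2d_pt v x y) ->
  (forall x y, ex_derive (fun t => v t y) x /\ ex_derive (fun t => dx v t y) x) ->
  (forall x y, ex_derive (fun t => v x t) y /\ ex_derive (fun t => dy v x t) y) ->
  (forall x y, Rabs (v x y) <= A) ->
  (forall x y, Rabs (eps^2 * (dx (dx v) x y + dy (dy v) x y)) <= K) ->
  forall x0 y0, eps * Rabs (dy v x0 y0) <= 2*A + (K+1)/2.
Proof.
  intros He HA HK Hc Hdx Hdy HvA HvK x0 y0.
  apply (grad_x (fun a b => v b a) eps A K He HA HK).
  - intros x y eps'. destruct (Hc y x eps') as [δ Hδ]. exists δ. intros u w Hu Hw.
    apply Hδ; assumption.
  - intros x y. exact (Hdy y x).
  - intros x y. exact (Hdx y x).
  - intros x y. apply HvA.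
  - intros x y. change (Rabs (eps ^ 2 * (dy (dy v) y x + dx (dx v) y x)) <= K).
    rewrite Rplus_comm. apply HvK.
Qed.


Lemma sqrt_le_self S : 1 <= S -> sqrt S <= S.
Proof.
  intros H. assert (H1 : 1 <= sqrt S) by (rewrite <- sqrt_1; apply sqrt_le_1_alt; lra).
  assert (H2 := sqrt_sqrt S ltac:(lra)). nra.
Qed.

Lemma Wbound (mu f1 f2 u1 u2 : R -> R -> R) (eps al Bm Bf Mm : R) :
  0 < eps -> 0 <= eps * al <= Mm ->
  (forall x y, Rabs (mu x y) <= Bm) ->
  (forall x y, Rabs (f1 x y) <= Bf /\ Rabs (f2 x y) <= Bf) ->
  Ck2 2 u1 -> Ck2 2 u2 ->
  (forall x y,
     eps ^ 2 * lap u1 x y + mu x y * u1 x y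
     - (u1 x y ^ 2 + u2 x y ^ 2) * u1 x y + eps * al * f1 x y = 0) ->
  (forall x y,
     eps ^ 2 * lap u2 x y + mu x y * u2 x y
     - (u1 x y ^ 2 + u2 x y ^ 2) * u2 x y + eps * al * f2 x y = 0) ->
  (forall e, 0 < e -> exists Rr, forall x y, Rr < norm2 x y ->
        norm2 (u1 x y) (u2 x y) < e) ->
  forall x y, u1 x y ^ 2 + u2 x y ^ 2 <= 1 + Bm + 2 * Mm * Bf.
Proof.
  intros He Hea HBm HBf Hu1 Hu2 E1 E2 Hdec x y.
  destruct (Ck2_facts u1 Hu1) as [Hc1 [Hx1 Hy1]].
  destruct (Ck2_facts u2 Hu2) as [Hc2 [Hx2 Hy2]].
  set (S := 1 + Bm + 2 * Mm * Bf).
  set (W := fun a b => u1 a b ^ 2 + u2 a b ^ 2).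
  change (W x y <= S).
  destruct (Rle_or_lt (W x y) S) as [|HWS]; [assumption|exfalso].
  assert (HBm0 : 0 <= Bm) by (generalize (HBm 0 0) (Rabs_pos (mu 0 0)); lra).
  assert (HBf0 : 0 <= Bf) by (generalize (proj1 (HBf 0 0)) (Rabs_pos (f1 0 0)); lra).
  assert (HS1 : 1 <= S) by (unfold S; assert (0 <= Mm * Bf) by (apply Rmult_le_pos; lra); lra).
  assert (HW0 : forall a b, 0 <= W a b).
  { intros a b. unfold W. assert (0 <= u1 a b * u1 a b) by apply Rle_0_sqr.
    assert (0 <= u2 a b * u2 a b) by apply Rle_0_sqr. simpl; lra. }
  assert (He0 : 0 < sqrt (W x y)) by (apply sqrt_lt_R0; lra).
  destruct (Hdec _ He0) as [Rr HRr].
  assert (Hout : forall a b, Rr < norm2 a b -> W a b < W x y).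
  { intros a b Hab. specialize (HRr a b Hab). unfold norm2 in HRr.
    destruct (Rlt_or_le (W a b) (W x y)) as [|Hge]; [assumption|].
    apply sqrt_le_1_alt in Hge. unfold W in Hge, HRr. lra. }
  set (L := Rabs Rr + Rabs x + Rabs y + 1).
  assert (HcW : forall a b, continuity_2d_pt (fun a b => - W a b) a b).
  { intros a b. apply continuity_2d_pt_ext with (f := fun a b => - (u1 a b * u1 a b + u2 a b * u2 a b)).
    { intros; unfold W; simpl; ring. }
    apply continuity_2d_pt_opp. apply continuity_2d_pt_plus; apply continuity_2d_pt_mult;
    first [apply Hc1 | apply Hc2]. }
  destruct (evt2_min (fun a b => - W a b) (-L) L (-L) L) as [p [q [Hp [Hq Hmin]]]];
    [unfold L; generalize (Rabs_pos Rr) (Rabs_pos x) (Rabs_pos y); lra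
    |unfold L; generalize (Rabs_pos Rr) (Rabs_pos x) (Rabs_pos y); lra|exact HcW|].
  assert (Hxy : W x y <= W p q).
  { assert (- W p q <= - W x y); [|lra]. apply Hmin;
    unfold L; generalize (Rabs_pos Rr) (Rabs_pos x) (Rabs_pos y);
    generalize (Rabs_le_between x (Rabs x)) (Rabs_le_between y (Rabs y)); intros [Ha _] [Hb _];
    specialize (Ha (Rle_refl _)); specialize (Hb (Rle_refl _)); lra. }
  assert (Hglob : forall a b, W a b <= W p q).
  { intros a b. destruct (Rlt_or_le Rr (norm2 a b)) as [Hr|Hr].
    - generalize (Hout a b Hr). lra.
    - assert (- W p q <= - W a b); [|lra]. destruct (abs_le_norm2 a b) as [Ha Hb].
      apply Rabs_le_between in Ha. apply Rabs_le_between in Hb.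
      apply Hmin; unfold L; generalize (Rabs_pos Rr) (Rabs_pos x) (Rabs_pos y) (Rle_abs Rr); lra. }
  set (P := u1 p q). set (Q := u2 p q).
  set (h2 := - (2 * (dx u1 p q * dx u1 p q + P * dx (dx u1) p q)
              + 2 * (dx u2 p q * dx u2 p q + Q * dx (dx u2) p q))).
  set (k2 := - (2 * (dy u1 p q * dy u1 p q + P * dy (dy u1) p q)
              + 2 * (dy u2 p q * dy u2 p q + Q * dy (dy u2) p q))).
  assert (H1 : 0 <= h2).
  { apply (locmin_d2 (fun t => - W t q)
            (fun t => - (2 * u1 t q * dx u1 t q + 2 * u2 t q * dx u2 t q)) p h2 1 Rlt_0_1).
    - intros t _. unfold W. auto_derive.
      + conjs; first [exdu u1 Hx1 Hy1 | exdu u2 Hx2 Hy2].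
      + unfold dx. ring.
    - auto_derive.
      + conjs; first [exdu u1 Hx1 Hy1 | exdu u2 Hx2 Hy2].
      + unfold h2, P, Q, dx. ring.
    - intros t _. generalize (Hglob t q). lra. }
  assert (H2 : 0 <= k2).
  { apply (locmin_d2 (fun t => - W p t)
            (fun t => - (2 * u1 p t * dy u1 p t + 2 * u2 p t * dy u2 p t)) q k2 1 Rlt_0_1).
    - intros t _. unfold W. auto_derive.
      + conjs; first [exdu u1 Hx1 Hy1 | exdu u2 Hx2 Hy2].
      + unfold dy. ring.
    - auto_derive.
      + conjs; first [exdu u1 Hx1 Hy1 | exdu u2 Hx2 Hy2].
      + unfold k2, P, Q, dy. ring.
    - intros t _. generalize (Hglob p t). lra. }
  set (L1 := dx (dx u1) p q + dy (dy u1) p q).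
  set (L2 := dx (dx u2) p q + dy (dy u2) p q).
  assert (Hsum : P * L1 + Q * L2 <= 0).
  { assert (0 <= dx u1 p q * dx u1 p q) by apply Rle_0_sqr.
    assert (0 <= dx u2 p q * dx u2 p q) by apply Rle_0_sqr.
    assert (0 <= dy u1 p q * dy u1 p q) by apply Rle_0_sqr.
    assert (0 <= dy u2 p q * dy u2 p q) by apply Rle_0_sqr.
    unfold h2, k2 in *. unfold L1, L2. lra. }
  assert (Hsum2 : P * (eps^2 * L1) + Q * (eps^2 * L2) <= 0).
  { replace (P * (eps^2 * L1) + Q * (eps^2 * L2)) with (eps^2 * (P * L1 + Q * L2)) by ring.
    assert (0 < eps^2) by (apply pow_lt; lra). nra. }
  assert (EL1 : eps^2 * L1 = - (mu p q * P) + W p q * P - eps * al * f1 p q).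
  { generalize (E1 p q). unfold lap, L1, W, P, Q. lra. }
  assert (EL2 : eps^2 * L2 = - (mu p q * Q) + W p q * Q - eps * al * f2 p q).
  { generalize (E2 p q). unfold lap, L2, W, P, Q. lra. }
  rewrite EL1, EL2 in Hsum2.
  set (w := W p q) in *.
  assert (Hw : w = P * P + Q * Q) by (unfold w, W, P, Q; simpl; ring).
  assert (Hw1 : 1 <= w) by lra.
  assert (HP : Rabs P <= w /\ Rabs Q <= w).
  { destruct (abs_le_norm2 P Q) as [HaP HaQ].
    assert (norm2 P Q <= w).
    { unfold norm2. replace (P^2 + Q^2) with w by (rewrite Hw; ring). apply sqrt_le_self; lra. }
    lra. }
  assert (Hmu : mu p q * w <= Bm * w).
  { apply Rmult_le_compat_r; [lra|]. generalize (HBm p q). intro H. apply Rabs_le_between in H. lra. }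
  assert (Hf : eps * al * (P * f1 p q + Q * f2 p q) <= Mm * (2 * w * Bf)).
  { assert (Hpf : Rabs (P * f1 p q + Q * f2 p q) <= 2 * w * Bf).
    { eapply Rle_trans; [apply Rabs_triang|]. rewrite !Rabs_mult.
      destruct (HBf p q) as [F1 F2]. destruct HP as [HP1 HP2].
      assert (Rabs P * Rabs (f1 p q) <= w * Bf) by (apply Rmult_le_compat; auto using Rabs_pos).
      assert (Rabs Q * Rabs (f2 p q) <= w * Bf) by (apply Rmult_le_compat; auto using Rabs_pos).
      lra. }
    apply Rabs_le_between in Hpf.
    assert (eps * al * (P * f1 p q + Q * f2 p q) <= eps * al * (2 * w * Bf)).
    { apply Rmult_le_compat_l; lra. }
    assert (eps * al * (2 * w * Bf) <= Mm * (2 * w * Bf)).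
    { apply Rmult_le_compat_r; [|lra]. assert (0 <= w * Bf) by (apply Rmult_le_pos; lra). lra. }
    lra. }
  assert (Hquad : w * w <= (Bm + 2 * Mm * Bf) * w).
  { assert (E : P * (- (mu p q * P) + w * P - eps * al * f1 p q) +
                Q * (- (mu p q * Q) + w * Q - eps * al * f2 p q)
              = w * w - mu p q * w - eps * al * (P * f1 p q + Q * f2 p q)) by (rewrite Hw; ring).
    rewrite E in Hsum2. lra. }
  assert (w <= Bm + 2 * Mm * Bf) by nra.
  unfold S in HWS. lra.
Qed.


Lemma final_grad (eps G d1 d2 d3 d4 : R) : 0 < eps -> 0 <= G ->
  eps * Rabs d1 <= G -> eps * Rabs d2 <= G -> eps * Rabs d3 <= G -> eps * Rabs d4 <= G ->
  eps * sqrt (d1 ^ 2 + d2 ^ 2 + d3 ^ 2 + d4 ^ 2) <= 2 * G.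
Proof.
  intros He HG H1 H2 H3 H4.
  assert (Hsq : forall d, eps * Rabs d <= G -> (eps * d) * (eps * d) <= G * G).
  { intros d Hd. assert (0 <= eps * Rabs d) by (apply Rmult_le_pos; [lra|apply Rabs_pos]).
    replace ((eps * d) * (eps * d)) with ((eps * Rabs d) * (eps * Rabs d)).
    apply Rmult_le_compat; lra.
    replace ((eps * Rabs d) * (eps * Rabs d)) with (eps * eps * (Rabs d * Rabs d)) by ring.
    rewrite <- Rabs_mult, Rabs_pos_eq by apply Rle_0_sqr. ring. }
  set (X := d1 ^ 2 + d2 ^ 2 + d3 ^ 2 + d4 ^ 2).
  assert (HX : 0 <= X) by (unfold X; simpl;
    assert (0 <= d1*d1) by apply Rle_0_sqr; assert (0 <= d2*d2) by apply Rle_0_sqr;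
    assert (0 <= d3*d3) by apply Rle_0_sqr; assert (0 <= d4*d4) by apply Rle_0_sqr; lra).
  assert (Hs := sqrt_sqrt X HX). assert (Hs0 := sqrt_pos X).
  set (s := sqrt X) in *.
  assert (E : (eps * s) * (eps * s) = (eps*d1)*(eps*d1) + (eps*d2)*(eps*d2) + (eps*d3)*(eps*d3) + (eps*d4)*(eps*d4)).
  { replace ((eps * s) * (eps * s)) with (eps * eps * (s * s)) by ring. rewrite Hs. unfold X. ring. }
  generalize (Hsq d1 H1) (Hsq d2 H2) (Hsq d3 H3) (Hsq d4 H4). intros.
  assert (0 <= eps * s) by (apply Rmult_le_pos; lra).
  set (Z := eps * s) in *.
  destruct (Rle_or_lt Z (2 * G)) as [|Hc]; [assumption|]. exfalso. nra.
Qed.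

Theorem mainTheorem5
  (mu : R -> R -> R) (mu_rad : R -> R)
  (f1 f2 : R -> R -> R) (f_rad : R -> R)
  (Hmu_smooth : smooth2 mu)
  (Hmu_rad : forall x y, mu x y = mu_rad (norm2 x y))
  (Hmu_rad_smooth : smooth1 mu_rad)
  (Hmu_rad_even : forall r, mu_rad (- r) = mu_rad r)
  (Hmu_bdd : bounded2 mu)
  (Hmu_decr : forall r, 0 < r -> Derive mu_rad r < 0)
  (Hmu_zero : exists rho, 0 < rho /\ mu_rad rho = 0 /\
                 forall r, 0 < r -> mu_rad r = 0 -> r = rho)
  (Hf1_smooth : smooth2 f1) (Hf2_smooth : smooth2 f2)
  (Hf1 : forall x y, f1 x y = f_rad (norm2 x y) * (x / norm2 x y))
  (Hf2 : forall x y, f2 x y = f_rad (norm2 x y) * (y / norm2 x y))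
  (Hf_rad_smooth : smooth1 f_rad)
  (Hf_rad_odd : forall r, f_rad (- r) = - f_rad r)
  (Hf_L1 : integrable2 (fun x y => norm2 (f1 x y) (f2 x y)))
  (Hf_Linf : bounded2 (fun x y => norm2 (f1 x y) (f2 x y)))
  (Hf_rad_pos : forall r, 0 < r -> 0 < f_rad r) :
  forall M : R,
  exists C : R,
  forall (eps a : R) (u1 u2 : R -> R -> R),
    0 < eps -> 0 <= a -> eps * a <= M ->
    Ck2 2 u1 -> Ck2 2 u2 ->
    (forall x y,
       eps ^ 2 * lap u1 x y + mu x y * u1 x y
       - (u1 x y ^ 2 + u2 x y ^ 2) * u1 x y + eps * a * f1 x y = 0) ->
    (forall x y,
       eps ^ 2 * lap u2 x y + mu x y * u2 x y
       - (u1 x y ^ 2 + u2 x y ^ 2) * u2 x y + eps * a * f2 x y = 0) ->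
    (forall e, 0 < e -> exists Rr, forall x y, Rr < norm2 x y ->
        norm2 (u1 x y) (u2 x y) < e) ->
    forall x y,
      norm2 (u1 x y) (u2 x y) <= C /\
      eps * sqrt (dx u1 x y ^ 2 + dy u1 x y ^ 2 + dx u2 x y ^ 2 + dy u2 x y ^ 2) <= C.
Proof.
  intros M.
  destruct Hmu_bdd as [Bm HBm]. destruct Hf_Linf as [Bf HBf0].
  set (Mm := Rabs M).
  assert (HBf : forall x y, Rabs (f1 x y) <= Bf /\ Rabs (f2 x y) <= Bf).
  { intros x y. destruct (abs_le_norm2 (f1 x y) (f2 x y)) as [Ha Hb].
    generalize (HBf0 x y) (Rle_abs (norm2 (f1 x y) (f2 x y))). intros. split; lra. }
  assert (HBm0 : 0 <= Bm) by (generalize (HBm 0 0) (Rabs_pos (mu 0 0)); lra).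
  assert (HBf1 : 0 <= Bf) by (generalize (proj1 (HBf 0 0)) (Rabs_pos (f1 0 0)); lra).
  assert (HMm : 0 <= Mm) by apply Rabs_pos.
  set (S := 1 + Bm + 2 * Mm * Bf).
  assert (HS1 : 1 <= S) by (unfold S; assert (0 <= Mm * Bf) by (apply Rmult_le_pos; lra); lra).
  set (K := Bm * S + S * S + Mm * Bf).
  assert (HK : 0 <= K) by (unfold K; assert (0 <= Mm * Bf) by (apply Rmult_le_pos; lra);
                           assert (0 <= Bm * S) by (apply Rmult_le_pos; lra); nra).
  set (G := 2 * S + (K + 1) / 2).
  exists (Rmax S (2 * G)).
  intros eps a u1 u2 He Ha HM Hu1 Hu2 E1 E2 Hdec.
  assert (Hea : 0 <= eps * a <= Mm).
  { split. apply Rmult_le_pos; lra. unfold Mm. generalize (Rle_abs M). lra. }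
  assert (HW := Wbound mu f1 f2 u1 u2 eps a Bm Bf Mm He Hea HBm HBf Hu1 Hu2 E1 E2 Hdec).
  fold S in HW.
  assert (Hn : forall x y, norm2 (u1 x y) (u2 x y) <= S).
  { intros x y. unfold norm2. eapply Rle_trans; [apply sqrt_le_1_alt, HW|].
    apply sqrt_le_self; exact HS1. }
  assert (Hu1A : forall x y, Rabs (u1 x y) <= S)
    by (intros x y; eapply Rle_trans; [apply (proj1 (abs_le_norm2 _ (u2 x y)))|apply Hn]).
  assert (Hu2A : forall x y, Rabs (u2 x y) <= S)
    by (intros x y; eapply Rle_trans; [apply (proj2 (abs_le_norm2 (u1 x y) _))|apply Hn]).
  assert (HW0 : forall x y, 0 <= u1 x y ^ 2 + u2 x y ^ 2).
  { intros x y. assert (0 <= u1 x y * u1 x y) by apply Rle_0_sqr.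
    assert (0 <= u2 x y * u2 x y) by apply Rle_0_sqr. simpl; lra. }
  assert (Hlap : forall (ui fi : R -> R -> R),
     (forall x y, Rabs (ui x y) <= S) -> (forall x y, Rabs (fi x y) <= Bf) ->
     (forall x y, eps ^ 2 * lap ui x y + mu x y * ui x y
       - (u1 x y ^ 2 + u2 x y ^ 2) * ui x y + eps * a * fi x y = 0) ->
     forall x y, Rabs (eps^2 * (dx (dx ui) x y + dy (dy ui) x y)) <= K).
  { intros ui fi Hui Hfi Ei x y.
    change (dx (dx ui) x y + dy (dy ui) x y) with (lap ui x y).
    replace (eps ^ 2 * lap ui x y) with
      (- (mu x y * ui x y) + (u1 x y ^ 2 + u2 x y ^ 2) * ui x y - eps * a * fi x y)
      by (generalize (Ei x y); lra).
    unfold Rminus. eapply Rle_trans; [apply Rabs_triang|].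
    eapply Rle_trans; [apply Rplus_le_compat_r, Rabs_triang|].
    rewrite Rabs_Ropp, Rabs_Ropp, !Rabs_mult.
    rewrite (Rabs_pos_eq (u1 x y ^ 2 + u2 x y ^ 2)) by apply HW0.
    rewrite (Rabs_pos_eq eps), (Rabs_pos_eq a) by lra.
    assert (Rabs (mu x y) * Rabs (ui x y) <= Bm * S)
      by (apply Rmult_le_compat; auto using Rabs_pos).
    assert ((u1 x y ^ 2 + u2 x y ^ 2) * Rabs (ui x y) <= S * S)
      by (apply Rmult_le_compat; auto using Rabs_pos).
    assert (eps * a * Rabs (fi x y) <= Mm * Bf)
      by (apply Rmult_le_compat; try lra; auto using Rabs_pos).
    unfold K. lra. }
  destruct (Ck2_facts u1 Hu1) as [Hc1 [Hx1 Hy1]].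
  destruct (Ck2_facts u2 Hu2) as [Hc2 [Hx2 Hy2]].
  assert (HK1 := Hlap u1 f1 Hu1A (fun x y => proj1 (HBf x y)) E1).
  assert (HK2 := Hlap u2 f2 Hu2A (fun x y => proj2 (HBf x y)) E2).
  intros x y. split.
  - eapply Rle_trans; [apply Hn|apply Rmax_l].
  - eapply Rle_trans; [|apply Rmax_r].
    apply final_grad; [exact He| unfold G; lra | | | |].
    + exact (grad_x u1 eps S K He ltac:(lra) HK Hc1 Hx1 Hy1 Hu1A HK1 x y).
    + exact (grad_y u1 eps S K He ltac:(lra) HK Hc1 Hx1 Hy1 Hu1A HK1 x y).
    + exact (grad_x u2 eps S K He ltac:(lra) HK Hc2 Hx2 Hy2 Hu2A HK2 x y).
    + exact (grad_y u2 eps S K He ltac:(lra) HK Hc2 Hx2 Hy2 Hu2A HK2 x y).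
Qed.
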